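(* Let $n\ge 1$. For $i,j\in\{1,\dots,n\}$ let $L_i>0$, $\mu_i>0$, $\theta_i\ge 0$ and $\gamma_{ij}\ge 0$ be real numbers with $\gamma_{ii}=0$ and $\gamma_{ij}=\gamma_{ji}$ for all $i,j$. Let $A$ be the $n\times n$ real matrix with entries $$A_{ii}=-\Big(\frac{\mu_i}{L_i}+\theta_i+\sum_{j=1}^n\frac{\gamma_{ij}}{L_i}\Big),\qquad A_{ij}=\frac{\gamma_{ij}}{L_j}\quad (i\neq j).$$ Then every eigenvalue of $A$ has negative real part.
   Context: This matrix is the coefficient matrix of the linear inventory model $y'(t)=Ay(t)+b$ for $n$ warehouses in one echelon, where $L_i$ is the maximum inventory level of warehouse $i$, $\mu_i$ its maximum supply rate, $\theta_i$ its deterioration percentage per unit time, and $\gamma_{ij}$ the maximum lateral transshipment rate from warehouse $i$ to warehouse $j$. *)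

(* Defs.v *)
From HB Require Import structures.
From mathcomp Require Import all_boot all_order all_algebra.
From mathcomp Require Import complex.
Set Implicit Arguments. Unset Strict Implicit. Unset Printing Implicit Defensive.
Import Order.TTheory GRing.Theory Num.Theory.
Local Open Scope ring_scope.

(* Coefficient matrix A of the linear inventory model y' = A y + b. *)
Definition inventory_matrix (R : rcfType) (n : nat)
  (L mu theta : 'I_n -> R) (gamma : 'I_n -> 'I_n -> R) : 'M[R]_n :=
  \matrix_(i < n, j < n)
    if i == j then - (mu i / L i + theta i + \sum_(k < n) gamma i k / L i)
    else gamma i j / L j.

Definition complexify (R : rcfType) (n : nat) (A : 'M[R]_n) : 'M[complex R]_n :=
  map_mx (fun x : R => Complex x 0) A.

(* Main.v *)
Require Import Defs.
From HB Require Import structures.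
From mathcomp Require Import all_boot all_order all_algebra.
From mathcomp Require Import complex.
From mathcomp Require Import ring lra.
Import Order.TTheory GRing.Theory Num.Theory.
Local Open Scope ring_scope.

Theorem lemma1 (R : rcfType) (n : nat) (hn : (0 < n)%N)
  (L mu theta : 'I_n -> R) (gamma : 'I_n -> 'I_n -> R)
  (hL : forall i, 0 < L i) (hmu : forall i, 0 < mu i)
  (htheta : forall i, 0 <= theta i)
  (hgamma : forall i j, 0 <= gamma i j)
  (hdiag : forall i, gamma i i = 0)
  (hsym : forall i j, gamma i j = gamma j i) :
  forall z : complex R,
    eigenvalue (complexify (inventory_matrix L mu theta gamma)) z ->
    complex.Re z < 0.
Proof.
move=> z /eigenvalueP [v Hv v0].
pose N (x : complex R) := Normc.normc x.
have N0 x : 0 <= N x by case: x => a b; rewrite /N /= sqrtr_ge0.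
have NR (a : R) : N (Complex a 0) = `|a|.
  by rewrite /N /= expr0n /= addr0 sqrtr_sqr.
have ReN x : complex.Re x <= N x.
  case: x => a b /=; apply: le_trans (ler_norm a) _.
  rewrite -sqrtr_sqr ler_sqrt ?addr_ge0 ?sqr_ge0 // lerDl sqr_ge0 //.
have NM x y : N (x * y) = N x * N y by exact: Normc.normcM.
have NS (P : pred 'I_n) (F : 'I_n -> complex R) :
    N (\sum_(i | P i) F i) <= \sum_(i | P i) N (F i).
  apply: (big_ind2 (fun x y => N x <= y)).
  - by rewrite /N Normc.normc0.
  - move=> x1 x2 y1 y2 h1 h2; apply: le_trans (le_normcD x1 y1) _.
    exact: lerD.
  - by [].
pose i0 := Ordinal hn.
have [j _ Hj] := @arg_maxP _ R _ i0 xpredT (fun i => N (v 0 i)) isT.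
have mpos : 0 < N (v 0 j).
  rewrite lt_def N0 andbT; apply: contraNneq v0 => H.
  apply/eqP/matrixP => a b; rewrite ord1 mxE.
  apply: Normc.eq0_normc; apply/eqP; rewrite eq_le N0 andbT.
  rewrite -H; exact: (Hj b).
set S := \sum_(k < n) gamma j k / L j.
set D := mu j / L j + theta j + S.
have E : (v *m complexify (inventory_matrix L mu theta gamma)) 0 j = (z *: v) 0 j by rewrite Hv.
rewrite /= !mxE (bigD1 j) //= in E.
rewrite /complexify /inventory_matrix !mxE eqxx in E.
rewrite (eq_bigr (fun i => v 0 i * Complex (gamma i j / L j) 0)) in E; last first.
  by move=> i /negbTE ij; rewrite !mxE ij.
rewrite -/S -/D in E.
have E2 : (z + Complex D 0) * v 0 j =
   \sum_(i < n | i != j) v 0 i * Complex (gamma i j / L j) 0.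
  have -> : \sum_(i < n | i != j) v 0 i * Complex (gamma i j / L j) 0
      = z * v 0 j - v 0 j * Complex (- D) 0 by rewrite -E addrAC subrr add0r.
  have -> : Complex (- D) 0 = - Complex D 0 by rewrite -[RHS]/(Complex (-D) (-0)) oppr0.
  ring.
have HS : \sum_(i < n | i != j) gamma i j / L j = S.
  rewrite /S [RHS](bigD1 j) //= hdiag mul0r add0r.
  by apply: eq_bigr => i _; rewrite hsym.
have key : N (z + Complex D 0) * N (v 0 j) <= N (v 0 j) * S.
  rewrite -NM E2 -HS mulr_sumr; apply: le_trans (NS _ _) _.
  apply: ler_sum => i _; rewrite NM NR ger0_norm; last first.
    by apply: divr_ge0 => //; apply: ltW.
  apply: ler_wpM2r; first by apply: divr_ge0 => //; apply: ltW.
  exact: Hj.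
rewrite mulrC ler_pM2l // in key.
have := le_trans (ReN _) key.
have -> : complex.Re (z + Complex D 0) = complex.Re z + D by case: z {E E2 Hv key}.
have : 0 < mu j / L j by apply: divr_gt0.
have := htheta j.
rewrite /D; lra.
Qed.
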